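(* Let $G\in\mathcal{P}_1(\Theta)$ be such that $\operatorname{supp}(G)$ is a non-degenerate interval. Then $G$ has a regular SBA. Furthermore, for every $n\in\mathbb{N}$ the intervals $\bar\Theta_{n,1},\ldots,\bar\Theta_{n,2^n}$ are non-degenerate and form a partition of $\operatorname{supp}(G)$.
   Context: $\Theta\subseteq\mathbb{R}$ is $\mathbb{R}$, a closed half-line, or a compact interval with nonempty interior. $\mathcal{P}_1(\Theta)$: Borel probability measures on $\Theta$ with finite first moment; $G$ is identified with its distribution function. $b_G(a_1,a_2]=\int_{(a_1,a_2]}\theta\,dG/(G(a_2)-G(a_1))$ if $G(a_2)>G(a_1)$, else $a_1$. SBA: $\mu_{1,1}=\int\theta\,dG$; for $j\ge2$, $\mu_{j,2l}=\mu_{j-1,l}$ ($1\le l\le 2^{j-1}-1$), $\mu_{j,2l-1}=b_G(\mu_{j-1,l-1},\mu_{j-1,l}]$ ($1\le l\le 2^{j-1}$), with $\mu_{j,0}=\inf\Theta$, $\mu_{j,2^j}=\sup\Theta$. $G$ has a regular level $n$ SBA if $\mu_{n,1},\ldots,\mu_{n,2^n-1}$ are distinct, and a regular SBA if this holds for all $n$. Level $n$ intervals: $\Theta_{n,1}=[\mu_{n,0},\mu_{n,1}]$ if $\mu_{n,0}>-\infty$, else $(\mu_{n,0},\mu_{n,1}]$; $\Theta_{n,l}=(\mu_{n,l-1},\mu_{n,l}]$ for $2\le l\le 2^n-1$; $\Theta_{n,2^n}=(\mu_{n,2^n-1},\mu_{n,2^n}]$ if $\mu_{n,2^n}<\infty$,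 else $(\mu_{n,2^n-1},\infty)$. Then $\bar\Theta_{n,1}=\Theta_{n,1}\cap\operatorname{supp}(G)$, $\bar\Theta_{n,l}=\Theta_{n,l}$ for $2\le l\le 2^n-1$, $\bar\Theta_{n,2^n}=\Theta_{n,2^n}\cap\operatorname{supp}(G)$. *)

(* Defs.v *)
From HB Require Import structures.
From mathcomp Require Import all_boot all_order all_algebra.
From mathcomp Require Import all_classical all_reals all_analysis.
Set Implicit Arguments. Unset Strict Implicit. Unset Printing Implicit Defensive.
Import Order.TTheory GRing.Theory Num.Theory.
Import numFieldNormedType.Exports.
Local Open Scope classical_set_scope.
Local Open Scope ring_scope.

Section SBA.
Variable R : realType.

Definition admissible_Theta (Theta : set R) : Prop :=
  Theta = setT \/
  (exists a : R, Theta = `[a, +oo[%classic) \/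
  (exists a : R, Theta = `]-oo, a]%classic) \/
  (exists a b : R, a < b /\ Theta = `[a, b]%classic).

Definition in_P1 (Theta : set R) (G : probability R R) : Prop :=
  G Theta = 1%E /\ G.-integrable setT (fun x : R => x%:E).

Definition suppG (G : probability R R) : set R :=
  [set x | forall e : R, 0 < e ->
    let I := `](x - e)%R, (x + e)%R[%classic in (0 < G I)%E].

Definition nondeg_set (A : set R) : Prop :=
  exists x y, A x /\ A y /\ x < y.

Definition infT (Theta : set R) : \bar R := ereal_inf (EFin @` Theta).
Definition supT (Theta : set R) : \bar R := ereal_sup (EFin @` Theta).

Definition ocE (a1 a2 : \bar R) : set R := [set x | (a1 < x%:E)%E /\ (x%:E <= a2)%E].

Definition bG (G : probability R R) (a1 a2 : \bar R) : \bar R :=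
  if (0 < G (ocE a1 a2))%E
  then (fine (\int[G]_(x in ocE a1 a2) x%:E) / fine (G (ocE a1 a2)))%:E
  else a1.

Definition meanG (G : probability R R) : \bar R := \int[G]_x x%:E.

(* sba_aux k l = mu_{k+1, l} *)
Fixpoint sba_aux (Theta : set R) (G : probability R R) (k l : nat) : \bar R :=
  match k with
  | 0 => if l == 0 then infT Theta
         else if l == 1 then meanG G else supT Theta
  | k'.+1 =>
      if l == 0 then infT Theta
      else if l == (2 ^ k.+1)%N then supT Theta
      else if odd l then bG G (sba_aux Theta G k' l./2) (sba_aux Theta G k' (l./2).+1)
      else sba_aux Theta G k' l./2
  end.

(* mu_{n,l}, for n >= 1 and 0 <= l <= 2^n *)
Definition mu (Theta : set R) (G : probability R R) (n l : nat) : \bar R :=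
  sba_aux Theta G n.-1 l.

Definition regular_level (Theta : set R) (G : probability R R) (n : nat) : Prop :=
  forall l1 l2 : nat, (1 <= l1 < 2 ^ n)%N -> (1 <= l2 < 2 ^ n)%N ->
    mu Theta G n l1 = mu Theta G n l2 -> l1 = l2.

Definition regular_SBA (Theta : set R) (G : probability R R) : Prop :=
  forall n : nat, (1 <= n)%N -> regular_level Theta G n.

Definition Theta_int (Theta : set R) (G : probability R R) (n l : nat) : set R :=
  let m := mu Theta G n in
  if l == 1 then
    (if (m 0%N == -oo)%E then ocE (m 0%N) (m 1%N)
     else [set x | (m 0%N <= x%:E)%E /\ (x%:E <= m 1%N)%E])
  else if l == (2 ^ n)%N then
    (if (m (2 ^ n)%N < +oo)%E then ocE (m (2 ^ n)%N.-1) (m (2 ^ n)%N)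
     else [set x | (m (2 ^ n)%N.-1 < x%:E)%E])
  else ocE (m l.-1) (m l).

Definition Theta_bar (Theta : set R) (G : probability R R) (n l : nat) : set R :=
  if (l == 1) || (l == (2 ^ n)%N) then Theta_int Theta G n l `&` suppG G
  else Theta_int Theta G n l.

End SBA.

(* Main.v *)
Require Import Defs.
From HB Require Import structures.
From mathcomp Require Import all_boot all_order all_algebra.
From mathcomp Require Import all_classical all_reals all_analysis.
From mathcomp Require Import measurable_realfun.
From mathcomp Require Import ring lra.
From mathcomp Require Import zify.
Import Order.TTheory GRing.Theory Num.Theory.
Import numFieldNormedType.Exports.
Local Open Scope classical_set_scope.
Local Open Scope ring_scope.
Section S.
Variable R : realType.
Implicit Types G : probability R R.
Local Open Scope ereal_scope.
Lemma side G (A : set R) (f : R -> R) : measurable A ->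
  G.-integrable A (fun x => (f x)%:E) ->
  \int[G]_(x in A) (f x)%:E = 0 ->
  G (A `&` [set x | (0 < f x)%R]) = 0 -> G (A `&` [set x | (f x < 0)%R]) = 0.
Proof.
move=> mA intf i0 GN0.
have mfE := measurable_int G intf.
have mf : measurable_fun A f by exact/measurable_EFinP.
have mN : measurable (A `&` [set x | (0 < f x)%R]).
  have := mf mA `]0%R, +oo[%classic (measurable_itv _).
  by congr measurable; apply/seteqP; split=> x /=; rewrite in_itv/= andbT.
have mD : measurable (A `\` (A `&` [set x | (0 < f x)%R])) by exact: measurableD.
rewrite (negligible_integral mN mA intf GN0) in i0.
set D := A `\` _ in i0 mD.
have fle0 : forall x, D x -> (f x <= 0)%R.
  by move=> x [Ax /not_andP[//|/negP]]; rewrite -leNgt.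
have iabs : \int[G]_(x in D) `|(f x)%:E| = 0.
  rewrite (eq_integral (fun x => - (f x)%:E)); last first.
    by move=> x /[!inE] Dx /=; rewrite ler0_norm ?fle0// EFinN.
  have h := @integral_ge0N _ _ _ G D (fun x => - (f x)%:E).
  rewrite (eq_integral (fun x => (f x)%:E)) ?i0 in h; last by move=> x _; rewrite oppeK.
  apply/eqP; rewrite -oppe_eq0 -h ?oppe0//.
  by move=> x Dx; rewrite oppe_ge0 lee_fin fle0.
have := (ae_eq_integral_abs G mD (measurable_funS mA _ mfE)).1 iabs.
move=> /(_ (fun x (h : D x) => proj1 h)) [N [mN' N0 sN]].
have mL : measurable (A `&` [set x | (f x < 0)%R]).
  have := mf mA `]-oo, 0%R[%classic (measurable_itv _).
  by congr measurable; apply/seteqP; split=> x /=; rewrite in_itv/=.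
apply: (subset_measure0 mL mN' _ N0) => x [Ax fx0]; apply: sN => /=.
have Dx : D x by split=> // -[_ /= fx]; move: (lt_trans fx0 fx); rewrite ltxx.
by move=> /(_ Dx) []; apply/eqP; rewrite lt_eqF.
Qed.
Definition ratI (n : nat) : set R :=
  match unpickle n : option (rat * rat) with
  | Some (r1, r2) => `](ratr r1 : R), (ratr r2)[%classic
  | None => set0 end.

Lemma ratI_meas n : measurable (ratI n).
Proof. by rewrite /ratI; case: (unpickle n) => [[]|] //. Qed.

Lemma supp_pos G A : measurable A -> 0 < G A -> exists x, A x /\ suppG G x.
Proof.
move=> mA GA; apply/not_existsP => hA.
pose F n := if G (ratI n) == 0 then ratI n else set0.
have mF n : measurable (F n) by rewrite /F; case: ifP => _ //; exact: ratI_meas.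
have : A `<=` \bigcup_n F n.
  move=> x Ax.
  have : ~ suppG G x by move=> sx; apply: (hA x).
  move=> /existsNP [e /not_implyP [e0 /negP]]; rewrite -leNgt measure_le0 => /eqP Ge.
  have [q1 /[!in_itv] /andP [q1a q1b]] := @rat_in_itvoo R (x - e)%R x ltac:(by rewrite ltrBlDr ltrDl).
  have [q2 /[!in_itv] /andP [q2a q2b]] := @rat_in_itvoo R x (x + e)%R ltac:(by rewrite ltrDl).
  have sub : ratI (pickle (q1, q2)) `<=` `](x - e)%R, (x + e)%R[%classic.
    rewrite /ratI pickleK => y /=; rewrite !in_itv/= => /andP [h1 h2].
    by rewrite (lt_trans q1a h1) (lt_trans h2 q2b).
  exists (pickle (q1, q2)) => //.
  have G0 : G (ratI (pickle (q1, q2))) = 0.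
    by apply: (subset_measure0 (ratI_meas _) _ sub Ge); exact: measurable_itv.
  rewrite /F G0 eqxx /ratI pickleK /= in_itv/=; exact/andP.
move=> /(measure_sigma_subadditive G mF mA).
rewrite eseries0; last by move=> n _ _; rewrite /F; case: ifP => [/eqP//|]; rewrite measure0.
by rewrite leNgt GA.
Qed.
Lemma pos_itv G p q : is_interval (suppG G) -> suppG G p -> suppG G q -> (p < q)%R ->
  0 < G `]p, q[%classic.
Proof.
move=> iS sp sq pq.
have sm : suppG G ((p + q) / 2)%R.
  by apply: (iS p q sp sq); apply/andP; split; lra.
have e1 : ((p + q) / 2 - (q - p) / 2)%R = p by field.
have e2 : ((p + q) / 2 + (q - p) / 2)%R = q by field.
by have := sm ((q - p) / 2)%R; rewrite divr_gt0 ?subr_gt0// e1 e2; apply.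
Qed.

Arguments pos_itv {G p q}.
Arguments side {G A f}.
Definition mean_on G (A : set R) : R :=
  (fine (\int[G]_(x in A) x%:E) / fine (G A))%R.

Lemma key G (A : set R) p q : measurable A -> G.-integrable setT (fun x : R => x%:E) ->
  is_interval (suppG G) -> suppG G p -> suppG G q -> (p < q)%R ->
  `]p, q[%classic `<=` A ->
  exists u v, [/\ A u, A v, suppG G u, suppG G v & (u < mean_on G A < v)%R].
Proof.
move=> mA intT iS sp sq pq pqA.
have intA : G.-integrable A (fun x : R => x%:E) by apply: integrableS intT.
have GA0 : 0 < G A.
  by apply: lt_le_trans (pos_itv iS sp sq pq) _; apply: le_measure => //; rewrite inE.
have GAf : G A \is a fin_num by rewrite fin_num_measure.
have Iff : \int[G]_(x in A) x%:E \is a fin_num by exact: integrable_fin_num.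
set b := mean_on G A.
have mAb : (fine (G A) * b)%R = fine (\int[G]_(x in A) x%:E).
  rewrite /b /mean_on mulrC -mulrA mulVf ?mulr1//.
  by apply: lt0r_neq0; rewrite -lte_fin fineK.
have intc : G.-integrable A (EFin \o cst b) by exact: finite_measure_integrable_cst.
have ic : \int[G]_(x in A) (cst b x)%:E = b%:E * G A by rewrite -(@integral_cst _ _ _ G A mA b%:E).
have i1 : \int[G]_(x in A) (x - b)%:E = 0.
  under eq_integral do rewrite EFinB.
  rewrite (@integralB_EFin _ _ _ G A id (cst b) mA intA intc) ic /=.
  by rewrite -(fineK GAf) -EFinM mulrC mAb fineK// subee.
have i2 : \int[G]_(x in A) (b - x)%:E = 0.
  under eq_integral do rewrite EFinB.
  rewrite (@integralB_EFin _ _ _ G A (cst b) id mA intc intA) ic /=.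
  by rewrite -(fineK GAf) -EFinM mulrC mAb fineK// subee.
have intA1 : G.-integrable A (fun x => (x - b)%:E).
  by under eq_fun do rewrite EFinB; exact: (integrableB mA intA intc).
have intA2 : G.-integrable A (fun x => (b - x)%:E).
  by under eq_fun do rewrite EFinB; exact: (integrableB mA intc intA).
have eL : A `&` [set x | (x - b < 0)%R] = A `&` `]-oo, b[%classic.
  by apply/seteqP; split=> x [Ax]; rewrite /= in_itv/= subr_lt0.
have eU : A `&` [set x | (0 < x - b)%R] = A `&` `]b, +oo[%classic.
  by apply/seteqP; split=> x [Ax]; rewrite /= in_itv/= subr_gt0 andbT.
have eL' : A `&` [set x | (0 < b - x)%R] = A `&` `]-oo, b[%classic.
  by apply/seteqP; split=> x [Ax]; rewrite /= in_itv/= subr_gt0.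
have eU' : A `&` [set x | (b - x < 0)%R] = A `&` `]b, +oo[%classic.
  by apply/seteqP; split=> x [Ax]; rewrite /= in_itv/= subr_lt0 andbT.
have LU : G (A `&` `]-oo, b[%classic) != 0 -> G (A `&` `]b, +oo[%classic) != 0.
  by apply: contra_neq => h; rewrite -eL (side mA intA1 i1) // eU.
have UL : G (A `&` `]b, +oo[%classic) != 0 -> G (A `&` `]-oo, b[%classic) != 0.
  by apply: contra_neq => h; rewrite -eU' (side mA intA2 i2) // eL'.
have [LP UP] : G (A `&` `]-oo, b[%classic) != 0 /\ G (A `&` `]b, +oo[%classic) != 0.
  have mid_p : (p < (p + q) / 2)%R by lra.
  have mid_q : ((p + q) / 2 < q)%R by lra.
  have sm : suppG G ((p + q) / 2)%R by apply: (iS p q sp sq); apply/andP; split; lra.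
  have [bm|mb] := leP ((p + q) / 2)%R b.
    suff h : G (A `&` `]-oo, b[%classic) != 0 by split => //; exact: LU.
    rewrite gt_eqF//; apply: lt_le_trans (pos_itv iS sp sm mid_p) _.
    apply: le_measure; rewrite ?inE; [exact: measurable_itv| exact: measurableI|].
    move=> x /[dup] xi /=; rewrite !in_itv/= => /andP [px xm]; split.
      by apply: pqA; rewrite /= in_itv/= px (lt_trans xm mid_q).
    exact: lt_le_trans xm bm.
  suff h : G (A `&` `]b, +oo[%classic) != 0 by split => //; exact: UL.
  rewrite gt_eqF//; apply: lt_le_trans (pos_itv iS sm sq mid_q) _.
  apply: le_measure; rewrite ?inE; [exact: measurable_itv| exact: measurableI|].
  move=> x /=; rewrite !in_itv/= => /andP [mx xq]; split.
    by apply: pqA; rewrite /= in_itv/= xq (lt_trans mid_p mx).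
  by rewrite andbT (lt_trans mb mx).
have [u [[Au ub] su]] : exists u, (A `&` `]-oo, b[%classic) u /\ suppG G u.
  apply: supp_pos; first exact: measurableI.
  by rewrite lt0e LP measure_ge0.
have [v [[Av bv] sv]] : exists v, (A `&` `]b, +oo[%classic) v /\ suppG G v.
  apply: supp_pos; first exact: measurableI.
  by rewrite lt0e UP measure_ge0.
exists u, v; split => //; move: ub bv; rewrite /= !in_itv/= andbT => -> -> //.
Qed.

Lemma zero_out G (Theta I : set R) : measurable Theta -> G Theta = 1 ->
  measurable I -> I `<=` ~` Theta -> G I = 0.
Proof.
move=> mT GT mI IT; apply: (@subset_measure0 _ _ _ G _ _ mI (measurableC mT) IT).
have h := @probability_setC _ _ _ G _ mT.
by rewrite GT subee// in h; exact: h.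
Qed.

Arguments zero_out {G Theta I}.
Lemma supp_Theta G Theta : admissible_Theta Theta -> G Theta = 1 ->
  suppG G `<=` Theta.
Proof.
move=> aT GT x sx; apply: contrapT => nT.
suff [e [e0 sub]] : exists e : R, (0 < e)%R /\ `](x - e)%R, (x + e)%R[%classic `<=` ~` Theta.
  have mT : measurable Theta.
    by case: aT => [->//|[[a ->]|[[a ->]|[a [b [_ ->]]]]]]; exact: measurable_itv.
  have mI : measurable (`](x - e)%R, (x + e)%R[%classic : set R) by exact: measurable_itv.
  by have := sx e e0; rewrite /= (zero_out mT GT mI sub) ltxx.
case: aT nT => [-> /(_ I) []|[[a ->]|[[a ->]|[a [b [_ ->]]]]]] /=; rewrite in_itv/=.
- rewrite andbT => /negP; rewrite -ltNge => xa; exists (a - x)%R; split; first by rewrite subr_gt0.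
  move=> y /=; rewrite !in_itv/= andbT => /andP [_ ya]; rewrite leNgt.
  by apply/negP/negPn; move: ya; rewrite addrC subrK.
- move=> /negP; rewrite -ltNge => xa; exists (x - a)%R; split; first by rewrite subr_gt0.
  move=> y /=; rewrite !in_itv/= => /andP [ya _]; rewrite leNgt.
  by apply/negP/negPn; move: ya; rewrite opprB addrC subrK.
- move=> /negP; rewrite negb_and -!ltNge => /orP [xa|xb].
  + exists (a - x)%R; split; first by rewrite subr_gt0.
    move=> y /=; rewrite !in_itv/= => /andP [_ ya]; apply/negP; rewrite negb_and leNgt.
    by apply/orP; left; apply/negPn; move: ya; rewrite addrC subrK.
  + exists (x - b)%R; split; first by rewrite subr_gt0.
    move=> y /=; rewrite !in_itv/= => /andP [yb _]; apply/negP; rewrite negb_and [(y <= b)%R]leNgt.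
    by apply/orP; right; apply/negPn; move: yb; rewrite opprB addrC subrK.
Qed.

Lemma infT_le (Theta : set R) x : Theta x -> infT Theta <= x%:E.
Proof. by move=> Tx; apply: ereal_inf_lbound; exists x. Qed.

Lemma le_supT (Theta : set R) x : Theta x -> x%:E <= supT Theta.
Proof. by move=> Tx; apply: ereal_sup_ubound; exists x. Qed.

Arguments infT_le {Theta x}.
Arguments le_supT {Theta x}.
Definition nd G (a1 a2 : \bar R) := exists x y,
  [/\ a1 < x%:E, (x < y)%R, y%:E <= a2, suppG G x & suppG G y].

Lemma ocE_meas (a1 a2 : \bar R) : measurable (ocE a1 a2).
Proof.
have := @EFin_measurable R setT measurableT _ (emeasurable_itv `]a1, a2]).
rewrite setTI; congr measurable; apply/seteqP; split=> x /=; rewrite in_itv/=.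
  by move/andP.
by move=> [-> ->].
Qed.

Arguments key {G A p q}.
Arguments supp_Theta {G Theta}.

Lemma step G a1 a2 : G.-integrable setT (fun x : R => x%:E) ->
  is_interval (suppG G) -> nd G a1 a2 ->
  nd G a1 (bG G a1 a2) /\ nd G (bG G a1 a2) a2.
Proof.
move=> intT iS [x [y [a1x xy ya2 sx sy]]].
have sub : `]x, y[%classic `<=` ocE a1 a2.
  move=> z /=; rewrite in_itv/= => /andP [xz zy]; split.
    by apply: lt_trans a1x _; rewrite lte_fin.
  by apply: le_trans ya2; rewrite lee_fin ltW.
have [u [v [Au Av su sv /andP [ub bv]]]] := key (ocE_meas a1 a2) intT iS sx sy xy sub.
have GA : 0 < G (ocE a1 a2).
  apply: lt_le_trans (pos_itv iS sx sy xy) _.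
  apply: le_measure => //; rewrite inE.
    exact: measurable_itv.
  exact: ocE_meas.
have bE : bG G a1 a2 = (mean_on G (ocE a1 a2))%:E by rewrite /bG GA.
rewrite bE; set b := mean_on G _ in ub bv *.
have sb : suppG G b by apply: (iS u v su sv); rewrite !ltW.
split.
  by exists u, b; split => //; case: Au.
have h1 : (b < (b + v) / 2)%R by lra.
have h2 : ((b + v) / 2 < v)%R by lra.
exists ((b + v) / 2)%R, v; split.
- by rewrite lte_fin.
- exact: h2.
- by case: Av.
- by apply: (iS b v sb sv); rewrite !ltW.
- exact: sv.
Qed.
Lemma base G (Theta : set R) : admissible_Theta Theta -> in_P1 Theta G ->
  is_interval (suppG G) -> nondeg_set (suppG G) ->
  nd G (infT Theta) (meanG G) /\ nd G (meanG G) (supT Theta).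
Proof.
move=> aT [GT intT] iS [p [q [sp [sq pq]]]].
have [u [v [_ _ su sv /andP [ub bv]]]] := key (@measurableT _ R) intT iS sp sq pq (fun _ _ => I).
have mE : meanG G = (mean_on G setT)%:E.
  rewrite /mean_on probability_setT /= divr1 fineK //.
  exact: integrable_fin_num.
rewrite mE; set b := mean_on G _ in ub bv *.
have sb : suppG G b by apply: (iS u v su sv); rewrite !ltW.
have uT := supp_Theta aT GT u su.
have vT := supp_Theta aT GT v sv.
split.
  have h1 : (u < (u + b) / 2)%R by lra.
  have h2 : ((u + b) / 2 < b)%R by lra.
  exists ((u + b) / 2)%R, b; split.
  - by apply: le_lt_trans (infT_le uT) _; rewrite lte_fin.
  - exact: h2.
  - by [].
  - by apply: (iS u b su sb); rewrite !ltW.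
  - exact: sb.
have h1 : (b < (b + v) / 2)%R by lra.
have h2 : ((b + v) / 2 < v)%R by lra.
exists ((b + v) / 2)%R, v; split.
- by rewrite lte_fin.
- exact: h2.
- exact: le_supT.
- by apply: (iS b v sb sv); rewrite !ltW.
- exact: sv.
Qed.



Lemma sba_ends (Theta : set R) G k :
  sba_aux Theta G k 0 = infT Theta /\ sba_aux Theta G k (2 ^ k.+1) = supT Theta.
Proof.
case: k => [//|k]; split => //=.
by rewrite expn_eq0 /= eqxx.
Qed.

Lemma sba_even (Theta : set R) G k m : (m <= 2 ^ k.+1)%N ->
  sba_aux Theta G k.+1 m.*2 = sba_aux Theta G k m.
Proof.
move=> hm; rewrite [LHS]/=.
have [->|m0] := eqVneq m 0%N; first by rewrite (sba_ends Theta G k).1.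
rewrite double_eq0 (negbTE m0).
have [mE|mN] := eqVneq m (2 ^ k.+1)%N.
  by rewrite mE -mul2n -expnS eqxx (sba_ends Theta G k).2.
have -> : (m.*2 == 2 ^ k.+2)%N = false.
  by rewrite expnS -mul2n eqn_pmul2l // (negbTE mN).
by rewrite odd_double doubleK.
Qed.

Lemma sba_odd (Theta : set R) G k m :
  sba_aux Theta G k.+1 m.*2.+1 = bG G (sba_aux Theta G k m) (sba_aux Theta G k m.+1).
Proof.
rewrite [LHS]/=.
have -> : (m.*2.+1 == 2 ^ k.+2)%N = false.
  apply/negbTE/negP => /eqP h; have := congr1 odd h.
  by rewrite /= odd_double expnS oddM.
by rewrite odd_double uphalf_double.
Qed.

Lemma inv_nd G (Theta : set R) : admissible_Theta Theta -> in_P1 Theta G ->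
  is_interval (suppG G) -> nondeg_set (suppG G) ->
  forall k l, (l < 2 ^ k.+1)%N -> nd G (sba_aux Theta G k l) (sba_aux Theta G k l.+1).
Proof.
move=> aT P1 iS nS; have intT := P1.2.
have [b1 b2] := base G Theta aT P1 iS nS.
elim=> [|k IH] l hl.
  by case: l hl => [|[|//]] _.
rewrite -(odd_double_half l) in hl *; set m := l./2 in hl *.
rewrite expnS mul2n in hl.
case: (odd l) hl => hl.
  have hm : (m < 2 ^ k.+1)%N by lia.
  rewrite add1n sba_odd -doubleS sba_even; last by lia.
  exact: (step G _ _ intT iS (IH m hm)).2.
have hm : (m < 2 ^ k.+1)%N by lia.
rewrite add0n sba_even; last by lia.
rewrite sba_odd; exact: (step G _ _ intT iS (IH m hm)).1.
Qed.

Lemma nd_lt G a1 a2 : nd G a1 a2 -> a1 < a2.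
Proof.
move=> [x [y [h1 h2 h3 _ _]]]; apply: lt_le_trans h1 (le_trans _ h3).
by rewrite lee_fin ltW.
Qed.

Lemma mono_lt (f : nat -> \bar R) N : (forall l, (l < N)%N -> f l < f l.+1) ->
  forall i j, (i < j <= N)%N -> f i < f j.
Proof.
move=> h i; elim=> [|j IH] /andP [ij jN]; first by [].
have [ij'|] := ltnP i j.
  by apply: lt_trans (IH _) (h _ jN); rewrite ij' ltnW.
move=> ji; have -> : i = j by apply/eqP; rewrite eqn_leq ji -ltnS ij.
exact: h.
Qed.

Lemma mono_le (f : nat -> \bar R) N : (forall l, (l < N)%N -> f l < f l.+1) ->
  forall i j, (i <= j <= N)%N -> f i <= f j.
Proof.
move=> h i j /andP [ij jN]; have [->|ij'] := eqVneq i j; first by [].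
have hl : f i < f j.
  by apply: (@mono_lt f N h); rewrite jN andbT ltn_neqAle ij' ij.
exact: ltW.
Qed.

Lemma find_l (f : nat -> \bar R) (x : \bar R) a d : f a < x -> x <= f (a + d.+1)%N ->
  exists l, [/\ (a < l <= a + d.+1)%N, f l.-1 < x & x <= f l].
Proof.
move=> ha; elim: d => [|d IH] hb.
  by exists a.+1; rewrite addn1 in hb *; split => //; rewrite ?ltnSn ?leqnn.
have [h|h] := leP x (f (a + d.+1)%N).
  have [l [/andP [l1 l2] l3 l4]] := IH h.
  by exists l; split => //; rewrite l1 /= (leq_trans l2)// leq_add2l.
exists (a + d.+2)%N; split => //.
  by apply/andP; split; lia.
by rewrite addnS /=.
Qed.

Section level.
Variables (Theta : set R) (G : probability R R) (k : nat).
Let f := sba_aux Theta G k.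
Let N := (2 ^ k.+1)%N.

Lemma T1 l : (1 <= l <= N)%N -> ocE (f l.-1) (f l) `<=` Theta_int Theta G k.+1 l.
Proof.
move=> hl x [h1 h2]; rewrite /Theta_int /mu /=.
case: ifP => [/eqP l1|_].
  subst l; case: ifP => _; first by split.
  by split => //; exact: ltW.
case: ifP => [/eqP lN|_]; last by split.
by subst l; case: ifP => _.
Qed.

Lemma T2 l : (1 <= l)%N -> Theta_int Theta G k.+1 l `<=` [set x | x%:E <= f l].
Proof.
move=> hl x; rewrite /Theta_int /mu /=.
case: ifP => [/eqP l1|_].
  by subst l; case: ifP => _ [].
case: ifP => [/eqP lN|_]; last by case.
subst l; case: ifP => [_ [] //|].
by rewrite /f => /negbT; rewrite -leNgt leye_eq => /eqP -> _; rewrite leey.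
Qed.

Lemma T3 l : (2 <= l)%N -> Theta_int Theta G k.+1 l `<=` [set x | f l.-1 < x%:E].
Proof.
move=> hl x; rewrite /Theta_int /mu /=.
case: ifP => [/eqP l1|_]; first by subst l.
case: ifP => [/eqP lN|_]; last by case.
by subst l; case: ifP => _ // [].
Qed.

Lemma TB1 l : Theta_bar Theta G k.+1 l `<=` Theta_int Theta G k.+1 l.
Proof. by rewrite /Theta_bar; case: ifP => _ x // []. Qed.

Lemma TB2 l : Theta_int Theta G k.+1 l `&` suppG G `<=` Theta_bar Theta G k.+1 l.
Proof. by rewrite /Theta_bar; case: ifP => _ x // []. Qed.

Lemma TB3 l : (l == 1)%N || (l == N) -> Theta_bar Theta G k.+1 l `<=` suppG G.
Proof. by rewrite /Theta_bar => ->  x []. Qed.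

Lemma TB4 l : ~~ ((l == 1)%N || (l == N)) -> Theta_bar Theta G k.+1 l = Theta_int Theta G k.+1 l.
Proof. by rewrite /Theta_bar => /negbTE ->. Qed.

End level.
Arguments T1 {Theta G k}.
Arguments T2 {Theta G k}.
Arguments T3 {Theta G k}.
Arguments TB1 {Theta G k}.
Arguments TB2 {Theta G k}.
Arguments TB3 {Theta G k}.
Arguments TB4 {Theta G k}.

Lemma main (Theta : set R) (G : probability R R) :
  admissible_Theta Theta ->
  in_P1 Theta G ->
  is_interval (suppG G) -> nondeg_set (suppG G) ->
  regular_SBA Theta G /\
  (forall n : nat, (1 <= n)%N ->
     (forall l : nat, (1 <= l <= 2 ^ n)%N -> nondeg_set (Theta_bar Theta G n l)) /\
     (forall l1 l2 : nat, (1 <= l1 <= 2 ^ n)%N -> (1 <= l2 <= 2 ^ n)%N -> l1 <> l2 ->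
        Theta_bar Theta G n l1 `&` Theta_bar Theta G n l2 = set0) /\
     \bigcup_(l in [set l : nat | (1 <= l <= 2 ^ n)%N]) Theta_bar Theta G n l = suppG G).
Proof.
move=> aT P1 iS nS.
have ndk := inv_nd G Theta aT P1 iS nS.
have ltk k l : (l < 2 ^ k.+1)%N -> sba_aux Theta G k l < sba_aux Theta G k l.+1.
  by move=> h; apply: nd_lt (ndk k l h).
split.
  move=> [//|k] _ l1 l2 /andP [h1 h1'] /andP [h2 h2']; rewrite /mu /= => e.
  case: (ltngtP l1 l2) => // h.
    have hh : sba_aux Theta G k l1 < sba_aux Theta G k l2.
      by apply: (@mono_lt (sba_aux Theta G k) (2 ^ k.+1)%N (ltk k)); rewrite h ltnW.
    by rewrite e ltxx in hh.
  have hh : sba_aux Theta G k l2 < sba_aux Theta G k l1.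
    by apply: (@mono_lt (sba_aux Theta G k) (2 ^ k.+1)%N (ltk k)); rewrite h ltnW.
  by rewrite e ltxx in hh.
move=> [//|k] _.
have [f0 fN] := sba_ends Theta G k.
set f := sba_aux Theta G k in f0 fN ndk ltk *.
have hN : (2 <= 2 ^ k.+1)%N by rewrite expnS leq_pmulr ?expn_gt0.
set N := (2 ^ k.+1)%N in hN fN *.
have ndl l : (1 <= l <= N)%N -> nd G (f l.-1) (f l).
  move=> /andP [a b]; have h : (l.-1 < N)%N by lia.
  by have := ndk k _ h; rewrite prednK.
have mle : forall i j, (i <= j <= N)%N -> f i <= f j := @mono_le f N (ltk k).
split; [|split].
- move=> l hl; have [x [y [h1 h2 h3 sx sy]]] := ndl l hl.
  have hl1 : (1 <= l)%N by case/andP: hl.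
  exists x, y; split; [|split => //]; apply: TB2; split => //; apply: (T1 l hl); split => //.
  + by apply: le_trans h3; rewrite lee_fin ltW.
  + by apply: lt_trans h1 _; rewrite lte_fin.
- have key2 : forall i j x, (1 <= i <= N)%N -> (1 <= j <= N)%N -> (i < j)%N ->
      Theta_bar Theta G k.+1 i x -> Theta_bar Theta G k.+1 j x -> False.
    move=> i j x /andP [i1 iN] /andP [j1 jN] ij bi bj.
    have xi := T2 i i1 x (TB1 i x bi).
    have xj : f j.-1 < x%:E by apply: (T3 j (leq_trans _ ij) x (TB1 j x bj)).
    have hle : f i <= f j.-1 by apply: mle; apply/andP; split; lia.
    by have := lt_le_trans xj (le_trans xi hle); rewrite ltxx.
  move=> l1 l2 hl1 hl2 ne; apply/seteqP; split=> x // [b1 b2].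
  case: (ltngtP l1 l2) => h.
  + exact: (key2 l1 l2 x).
  + exact: (key2 l2 l1 x).
  + by apply: ne.
- apply/seteqP; split.
  + move=> x [l /= hl bx].
    case E: ((l == 1)%N || (l == N)); first exact: (TB3 l E x bx).
    rewrite (TB4 l) ?E // in bx.
    move/negbT: E; rewrite negb_or => /andP [/eqP l1 /eqP lN].
    have l2 : (2 <= l)%N by case/andP: hl => a _; lia.
    have xl := T3 l l2 x bx.
    have xu := T2 l (ltnW l2) x bx.
    have [p [y0 [hp1 hp2 hp3 sp _]]] := ndl 1%N ltac:(by apply/andP; split; lia).
    have [q [_ [hq1 _ _ sq _]]] := ndl N ltac:(by apply/andP; split; lia).
    have m1 : f 1%N <= f l.-1 by apply: mle; apply/andP; split; lia.
    have m2 : f l <= f N.-1 by apply: mle; apply/andP; split; lia.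
    have px : (p < x)%R.
      rewrite -lte_fin; apply: le_lt_trans xl; apply: le_trans m1.
      by apply: le_trans hp3; rewrite lee_fin ltW.
    have xq : (x < q)%R.
      by rewrite -lte_fin; apply: le_lt_trans hq1; apply: le_trans m2.
    by apply: (iS p q sp sq); rewrite !ltW.
  + move=> x sx.
    have xT := supp_Theta aT P1.1 x sx.
    have lo : f 0%N <= x%:E by rewrite f0; exact: infT_le.
    have hi : x%:E <= f N by rewrite fN; exact: le_supT.
    case: (leP (x%:E) (f 1%N)) => h.
      exists 1%N; first by move=> /=; lia.
      apply: TB2; split => //; rewrite /Theta_int /mu /= -/f.
      by case: ifP => [/eqP ->|_]; split => //; exact: ltNyr.
    have e : (1 + (N - 2).+1 = N)%N by lia.
    have [l [hl xl1 xl2]] := @find_l f (x%:E) 1 (N - 2) h ltac:(by rewrite e).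
    rewrite e in hl.
    exists l; first by rewrite /=; case/andP: hl => a b; apply/andP; split; lia.
    apply: TB2; split => //; apply: T1; first by case/andP: hl => a b; apply/andP; split; lia.
    by split.
Qed.

End S.


Theorem lemma1 (R : realType) (Theta : set R) (G : probability R R) :
  admissible_Theta Theta ->
  in_P1 Theta G ->
  is_interval (suppG G) -> nondeg_set (suppG G) ->
  regular_SBA Theta G /\
  (forall n : nat, (1 <= n)%N ->
     (forall l : nat, (1 <= l <= 2 ^ n)%N -> nondeg_set (Theta_bar Theta G n l)) /\
     (forall l1 l2 : nat, (1 <= l1 <= 2 ^ n)%N -> (1 <= l2 <= 2 ^ n)%N -> l1 <> l2 ->
        Theta_bar Theta G n l1 `&` Theta_bar Theta G n l2 = set0) /\
     \bigcup_(l in [set l : nat | (1 <= l <= 2 ^ n)%N]) Theta_bar Theta G n l = suppG G).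
Proof. exact: main. Qed.
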